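(* Let $X$ be a completely regular I-favorable space and let $\mathcal T$ be the family of all cozero subsets of $X$. Let $\mathcal C$ be a $\mathcal T$-club (defined in the context). For $\mathcal P\subseteq\mathcal R$ in $\mathcal C$ define $q^{\mathcal R}_{\mathcal P}:X/\mathcal R\to X/\mathcal P$ by $q^{\mathcal R}_{\mathcal P}([x]_{\mathcal R})=[x]_{\mathcal P}$, where each $X/\mathcal P$ carries the $\mathcal Q_{\mathcal P}$-topology. Then the limit $Y=\varprojlim\{X/\mathcal R,q^{\mathcal R}_{\mathcal P},\mathcal C\}$ (with $\mathcal C$ directed by inclusion) contains a dense subspace homeomorphic to $X$.
   Context: For a family $\mathcal P$ of subsets of a set $X$ and $x\in X$, $[x]_{\mathcal P}=\{y\in X: \text{for every }V\in\mathcal P,\ x\in V\iff y\in V\}$; $X/\mathcal P$ is the set of all classes $[x]_{\mathcal P}$, and $q_{\mathcal P}:X\to X/\mathcal P$, $q_{\mathcal P}(x)=[x]_{\mathcal P}$, is the $\mathcal Q_{\mathcal P}$-map. The $\mathcal Q_{\mathcal P}$-topology on $X/\mathcal P$ is the coarsest topology containing all sets $q_{\mathcal P}[V]$, $V\in\mathcal P$. For a family $\mathcal R$ of subsets of $X$, $\mathcal R_{seq}$ is the family of all sets $W$ for which there are $\{U_n\}_{n\in\omega}\subseteq\mathcal R$ and $\{V_n\}_{n\in\omega}\subseteq\mathcal R$ with $U_k\subseteq X\setminus V_k\subseteq U_{k+1}$ for all $k$ and $\bigcup_n U_n=W$. Open-open game: at inning $n$ Player I chooses a non-empty open $A_n$,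 Player II a non-empty open $B_n\subseteq A_n$; Player I wins if $\bigcup_n B_n$ is dense; $X$ is I-favorable if Player I has a winning strategy. A strategy is a function $\sigma$ on finite sequences (including the empty one) of members of a family of sets with values in that family; a family $\mathcal P$ is closed under $\sigma$ if $\sigma(\emptyset)\in\mathcal P$ and $\sigma(B_0,\dots,B_n)\in\mathcal P$ whenever $B_0,\dots,B_n\in\mathcal P$. $\mathcal T$-club: for each $W\in\mathcal T$ fix sequences $\{U^W_n\},\{V^W_n\}\subseteq\mathcal T$ witnessing $W\in\mathcal T_{seq}$ (possible since $W=f^{-1}((0,1])$ for a continuous $f:X\to[0,1]$). Choose $\sigma^*_k(\emptyset)\in\mathcal T$ for each $k$, put $\sigma^*_{2n}(W)=U^W_n$, $\sigma^*_{2n+1}(W)=V^W_n$ and $\sigma^*_k(S)=\sigma^*_k(\emptyset)$ for all other finite sequences $S$. Let also $\sigma_\cup(A_0,\dots,A_n)=A_0\cup\dots\cup A_n$ and $\sigma_\cap(A_0,\dots,A_n)=A_0\cap\dots\cap A_n$, and fix a winning strategy for Player I with values in $\mathcal T$. For a countable $\mathcal Q\subseteq\mathcal T$ let $\mathcal P(\mathcal Q)$ be the smallest family with $\mathcal Q\subseteq\mathcal P(\mathcal Q)\subseteq\mathcal T$ closed under this winning strategy, all $\sigma^*_k$, $\sigma_\cup$ and $\sigma_\cap$. A $\mathcal T$-club is the collection $\mathcal C=\{\mathcal P(\mathcal Q):\mathcal Q\subseteq\mathcal T\text{ countable}\}$; each member is countable, a ring of sets (closed under finite unions and intersections), contained in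 its own $seq$-family and closed under a winning strategy for Player I. *)

(* Defs.v *)
From HB Require Import structures.
From mathcomp Require Import all_boot all_order all_algebra.
From mathcomp Require Import all_classical all_reals all_analysis.
From mathcomp Require Import Rstruct Rstruct_topology.
Set Implicit Arguments. Unset Strict Implicit. Unset Printing Implicit Defensive.
Import Order.TTheory GRing.Theory Num.Theory.
Local Open Scope classical_set_scope.
Local Open Scope ring_scope.

Notation RR := Rdefinitions.R.

Definition cozero (X : topologicalType) (W : set X) : Prop :=
  exists f : X -> RR, continuous f /\ (forall x, 0 <= f x <= 1) /\
    W = [set x | 0 < f x].

Definition completely_regular (X : topologicalType) : Prop :=
  (forall x : X, closed [set x]) /\
  forall (A : set X) (x : X), closed A -> ~ A x ->
    exists f : X -> RR, continuous f /\ (forall z, 0 <= f z <= 1) /\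
      f x = 0 /\ (forall z, A z -> f z = 1).

(* Open-open game. A position is the sequence (B_0,...,B_{n-1}) of
   Player II's moves; Player I answers sigma (B_0,...,B_{n-1}) = A_n. *)
Definition legal_position (X : topologicalType)
    (sigma : seq (set X) -> set X) (s : seq (set X)) : Prop :=
  forall i, (i < size s)%N ->
    open (nth set0 s i) /\ nth set0 s i !=set0 /\
    nth set0 s i `<=` sigma (take i s).

Definition I_winning_strategy (X : topologicalType)
    (sigma : seq (set X) -> set X) : Prop :=
  (forall s, legal_position sigma s -> open (sigma s) /\ sigma s !=set0) /\
  (forall B : nat -> set X,
     (forall n, open (B n) /\ B n !=set0 /\ B n `<=` sigma (mkseq B n)) ->
     dense (\bigcup_n B n)).

Definition I_favorable (X : topologicalType) : Prop :=
  exists sigma : seq (set X) -> set X, I_winning_strategy sigma.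

Fixpoint all_in (X : Type) (F : set (set X)) (s : seq (set X)) : Prop :=
  match s with [::] => True | A :: s' => F A /\ all_in F s' end.

Definition closed_under (X : Type) (F : set (set X))
    (st : seq (set X) -> set X) : Prop :=
  forall s, all_in F s -> F (st s).

(* sigma*_k : sigma*_{2n}(W) = U^W_n, sigma*_{2n+1}(W) = V^W_n,
   and sigma*_k(S) = sigma*_k(empty) = e k otherwise. *)
Definition sigma_star (X : Type) (U V : set X -> nat -> set X)
    (e : nat -> set X) (k : nat) (s : seq (set X)) : set X :=
  match s with
  | [:: W] => if odd k then V W k./2 else U W k./2
  | _ => e k
  end.

(* U, V witness W \in T_seq for every W \in T. *)
Definition seq_witnesses (X : Type) (T : set (set X))
    (U V : set X -> nat -> set X) : Prop :=
  forall W, T W ->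
    (forall n, T (U W n) /\ T (V W n)) /\
    (forall k, U W k `<=` ~` V W k /\ ~` V W k `<=` U W k.+1) /\
    \bigcup_n U W n = W.

(* P(Q): the smallest family F with Q <= F <= T, closed under sigma,
   every sigma*_k, sigma_cup and sigma_cap (finite non-empty unions and
   intersections). *)
Definition Pgen (X : Type) (T : set (set X)) (U V : set X -> nat -> set X)
    (e : nat -> set X) (sigma : seq (set X) -> set X) (Q : set (set X))
    : set (set X) :=
  [set W | forall F : set (set X),
     Q `<=` F -> F `<=` T -> closed_under F sigma ->
     (forall k, closed_under F (sigma_star U V e k)) ->
     (forall A B, F A -> F B -> F (A `|` B)) ->
     (forall A B, F A -> F B -> F (A `&` B)) -> F W].

Definition is_T_club (X : topologicalType) (C : set (set (set X))) : Prop :=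
  exists (U V : set X -> nat -> set X) (e : nat -> set X)
         (sigma : seq (set X) -> set X),
    seq_witnesses (@cozero X) U V /\
    (forall k, cozero (e k)) /\
    I_winning_strategy sigma /\ (forall s, cozero (sigma s)) /\
    C = [set P | exists Q : set (set X),
                  Q `<=` @cozero X /\ countable Q /\
                  P = Pgen (@cozero X) U V e sigma Q].

Definition cls (X : Type) (P : set (set X)) (x : X) : set X :=
  [set y | forall V, P V -> (V x <-> V y)].

Definition quot (X : Type) (P : set (set X)) : set (set X) :=
  [set c | exists x, c = cls P x].

Definition is_topology_on (T : Type) (A : set T) (tau : set (set T)) : Prop :=
  (forall O, tau O -> O `<=` A) /\ tau A /\
  (forall O1 O2, tau O1 -> tau O2 -> tau (O1 `&` O2)) /\
  (forall F : set (set T), F `<=` tau -> tau (\bigcup_(O in F) O)).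

Definition gen_top_on (T : Type) (A : set T) (S : set (set T)) : set (set T) :=
  [set O | forall tau, is_topology_on A tau -> S `<=` tau -> tau O].

Definition Qtop (X : Type) (P : set (set X)) : set (set (set X)) :=
  gen_top_on (quot P) [set cls P @` V | V in P].

(* The product  prod_{R in C} X/R  (functions indexed by families,
   trivial (= set0) outside C), with the product (Tychonoff) topology. *)
Definition prod_space (X : Type) (C : set (set (set X)))
    : set (set (set X) -> set X) :=
  [set y | forall R, (C R -> quot R (y R)) /\ (~ C R -> y R = set0)].

Definition prod_top (X : Type) (C : set (set (set X)))
    : set (set (set (set X) -> set X)) :=
  gen_top_on (prod_space C)
    [set Z | exists R, C R /\ exists O, Qtop R O /\
             Z = [set y | prod_space C y /\ O (y R)]].

(* Inverse limit: threads compatible with q^R_P([x]_R) = [x]_P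
   for P <= R in C; topology = subspace topology of the product. *)
Definition inv_limit (X : Type) (C : set (set (set X)))
    : set (set (set X) -> set X) :=
  [set y | prod_space C y /\
     forall P R x, C P -> C R -> P `<=` R -> y R = cls R x -> y P = cls P x].

Definition inv_limit_top (X : Type) (C : set (set (set X)))
    : set (set (set (set X) -> set X)) :=
  [set Z | exists O, prod_top C O /\ Z = O `&` inv_limit C].

Definition has_dense_copy_of (X : topologicalType) (C : set (set (set X)))
    : Prop :=
  exists h : X -> (set (set X) -> set X),
    (forall x, inv_limit C (h x)) /\
    injective h /\
    (forall Z, inv_limit_top C Z -> Z !=set0 -> (Z `&` range h) !=set0) /\
    (forall Z, inv_limit_top C Z -> open (h @^-1` Z)) /\
    (forall U : set X, open U ->
       exists Z, inv_limit_top C Z /\ h @` U = Z `&` range h).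

(* Main.v *)
Require Import Defs.
From mathcomp Require Import all_boot all_classical all_analysis.
From mathcomp Require Import all_order all_algebra Rstruct Rstruct_topology lra.
Import Order.TTheory GRing.Theory Num.Theory.
Local Open Scope classical_set_scope.
Local Open Scope ring_scope.

Lemma cozero_open (X : topologicalType) (W : set X) : cozero W -> open W.
Proof.
move=> [f [cf [_ ->]]].
have -> : [set x | 0 < f x] = f @^-1` [set r | 0 < r] by [].
apply: open_comp; [move=> x _; exact: cf | exact: open_gt].
Qed.

Lemma cozeroU (X : topologicalType) (A B : set X) :
  cozero A -> cozero B -> cozero (A `|` B).
Proof.
move=> [f [cf [bf ->]]] [g [cg [bg ->]]].
exists (f \max g); split; first by move=> x; apply: continuous_max; [exact: cf|exact: cg].
split.
  move=> x /=; have /andP[f0 f1] := bf x; have /andP[g0 g1] := bg x.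
  by rewrite le_max f0 /= ge_max f1 g1.
by apply/seteqP; split => x /=; rewrite lt_max => /orP.
Qed.

Lemma cozeroI (X : topologicalType) (A B : set X) :
  cozero A -> cozero B -> cozero (A `&` B).
Proof.
move=> [f [cf [bf ->]]] [g [cg [bg ->]]].
exists (f \min g); split; first by move=> x; apply: continuous_min; [exact: cf|exact: cg].
split.
  move=> x /=; have /andP[f0 f1] := bf x; have /andP[g0 g1] := bg x.
  by rewrite le_min f0 g0 /= ge_min f1.
by apply/seteqP; split => x /=; rewrite lt_min => /andP.
Qed.

Lemma cozero_sub1 (X : topologicalType) (f : X -> RR) :
  continuous f -> (forall z, 0 <= f z <= 1) -> cozero [set z | 0 < 1 - f z].
Proof.
move=> cf bf; exists (fun z => 1 - f z); split.
  move=> z; have H := (@continuousB RR RR^o X (cst 1) f z (cvg_cst _) (cf z)); exact: H.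
split => // z; have /andP[h0 h1] := bf z; apply/andP; split; lra.
Qed.

Section Gen.
Variable X : topologicalType.
Variables (Uw Vw : set X -> nat -> set X) (e : nat -> set X)
  (sigma : seq (set X) -> set X).
Hypothesis hw : seq_witnesses (@cozero X) Uw Vw.
Hypothesis he : forall k, cozero (e k).
Hypothesis hsc : forall s, cozero (sigma s).

Lemma Pgen_sub Q : Q `<=` @cozero X -> Pgen (@cozero X) Uw Vw e sigma Q `<=` @cozero X.
Proof.
move=> hQ W hW; apply: hW => //.
- move=> k; rewrite /closed_under => -[|W1 s] /=; first by move=> _; exact: he.
  case: s => [|W' s] /=; last by move=> _; exact: he.
  move=> [hW1 _]; have [hn _] := hw _ hW1.
  by case: (odd k); [exact: (hn _).2 | exact: (hn _).1].
- by move=> A B; exact: cozeroU.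
- by move=> A B; exact: cozeroI.
Qed.
End Gen.

Lemma Pgen_mono {X : Type} T (U V : set X -> nat -> set X) e sigma Q1 Q2 :
  Q1 `<=` Q2 -> Pgen T U V e sigma Q1 `<=` Pgen T U V e sigma Q2.
Proof. by move=> hQ W hW F h1; apply: hW; exact: subset_trans h1. Qed.

Lemma Pgen_base {X : Type} T (U V : set X -> nat -> set X) e sigma Q :
  Q `<=` Pgen T U V e sigma Q.
Proof. by move=> W hW F h1 *; exact: h1. Qed.

Lemma cls_refl {X : Type} (R : set (set X)) x : cls R x x.
Proof. by move=> V _. Qed.

Lemma cls_eq {X : Type} (R : set (set X)) x y : cls R x y -> cls R x = cls R y.
Proof.
move=> hy; apply/seteqP; split => z hz V hV; move: (hy V hV) (hz V hV); tauto.
Qed.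

Lemma cls_sub {X : Type} (P R : set (set X)) x : P `<=` R -> cls R x `<=` cls P x.
Proof. by move=> hPR y hy V hV; apply: hy; exact: hPR. Qed.

Lemma cls_mem {X : Type} (R : set (set X)) V x y :
  R V -> cls R y = cls R x -> V y -> V x.
Proof. by move=> hV e; have := cls_refl R x; rewrite -e => /(_ V hV) []. Qed.

Lemma Qtop_open (X : topologicalType) (R : set (set X)) O :
  R `<=` @cozero X -> Qtop R O -> open [set x | O (cls R x)].
Proof.
move=> hR hO.
suff : [set O | O `<=` quot R /\ open [set x | O (cls R x)]] O by case.
apply: hO.
- split; first by move=> O1 [].
  split.
    split => //; have -> : [set x | quot R (cls R x)] = setT.
      by apply/seteqP; split => x //= _; exists x.
    exact: openT.
  split.
    move=> O1 O2 [s1 o1] [s2 o2]; split; first by move=> c [hc _]; exact: s1.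
    exact: openI.
  move=> F hF; split; first by move=> c [P1 hP1 hc]; have [s1 _] := hF _ hP1; exact: s1.
  by apply: bigcup_open => O1 /hF [].
- move=> _ [V hV <-]; split; first by move=> _ [v _ <-]; exists v.
  have -> : [set x | (cls R @` V) (cls R x)] = V.
    apply/seteqP; split => x /=; last by move=> hx; exists x.
    by move=> [v hv ev]; exact: cls_mem hV ev hv.
  exact/cozero_open/hR.
Qed.

Lemma Forall_in {A : Type} (P : A -> Prop) l : (forall a, List.In a l -> P a) -> List.Forall P l.
Proof. by move=> H; apply/List.Forall_forall. Qed.

Theorem theorem8 (X : topologicalType) (C : set (set (set X))) :
  completely_regular X -> I_favorable X -> is_T_club C ->
  has_dense_copy_of C.
Proof.
move=> [hT1 hcr] _ [Uw [Vw [e [sigma [hw [he [_ [hsc hC]]]]]]]].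
pose PG := Pgen (@cozero X) Uw Vw e sigma.
have inC : forall Q, Q `<=` @cozero X -> countable Q -> C (PG Q).
  by move=> Q hQ cQ; rewrite hC; exists Q.
have Ccoz : forall R, C R -> R `<=` @cozero X.
  by rewrite hC => R [Q [hQ [_ ->]]]; apply: Pgen_sub.
have Cdir : forall R1 R2, C R1 -> C R2 -> exists R, [/\ C R, R1 `<=` R & R2 `<=` R].
  rewrite hC => R1 R2 [Q1 [hQ1 [cQ1 ->]]] [Q2 [hQ2 [cQ2 ->]]].
  pose Q := \bigcup_(b in [set: bool]) (if b then Q1 else Q2).
  exists (PG Q); split.
  - exists Q; split; first by move=> q [[] _ hq]; [exact: hQ1 | exact: hQ2].
    split => //; apply: bigcup_countable; first exact: countableP.
    by move=> [] _.
  - by apply: Pgen_mono => q hq; exists true.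
  - by apply: Pgen_mono => q hq; exists false.
have C0 : exists R, C R by exists (PG set0); apply: inC => //; exact: countable0.
pose h := fun x : X => fun R => if pselect (C R) then cls R x else set0.
have hE : forall x R, C R -> h x R = cls R x.
  by move=> x R hR; rewrite /h; case: pselect.
have hN : forall x R, ~ C R -> h x R = set0.
  by move=> x R hR; rewrite /h; case: pselect.
have hinv : forall x, inv_limit C (h x).
  move=> x; split.
    by move=> R; split => hR; [rewrite hE //; exists x | exact: hN].
  move=> P R x0 hP hR hPR; rewrite !hE // => e0.
  have hx0 : cls R x x0 by rewrite e0; exact: cls_refl.
  by apply: cls_eq; exact: (@cls_sub _ P R x hPR _ hx0).
exists h; split => //; split.
  move=> x y hxy; case: (pselect (x = y)) => // nxy; exfalso.
  have [f [cf [bf [fy0 fx1]]]] := hcr [set x] y (hT1 x) (fun E => nxy (esym E)).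
  pose W := [set z | 0 < f z].
  have cW : cozero W by exists f.
  have CR : C (PG [set W]) by apply: inC; [move=> _ -> | exact: countable1].
  have e1 : cls (PG [set W]) x = cls (PG [set W]) y by rewrite -!hE // hxy.
  have : W y.
    apply: (@cls_mem _ (PG [set W]) W y x _ e1); first exact: Pgen_base.
    by rewrite /W /= fx1 //; exact: ltr01.
  by rewrite /W /= fy0 ltxx.
split.
  move=> _ [ O [hO ->]] [y [ Oy iy]].
  pose tau := [set O : set (set (set X) -> set X) | O `<=` prod_space C /\
    forall y, O y -> inv_limit C y ->
    exists l : seq (set (set X) * set (set X)),
      List.Forall (fun p => C p.1 /\ p.2 (y p.1)) l /\
      forall z, inv_limit C z -> List.Forall (fun p => p.2 (z p.1)) l -> O z].
  have tO : tau O.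
    apply: hO.
    - split; first by move=> O1 [].
      split.
        split => // y0 _ _; exists [::]; split; [by [] | by move=> z [pz _] _].
      split.
        move=> O1 O2 [s1 t1] [s2 t2]; split; first by move=> c [hc _]; exact: s1.
        move=> y0 [ o1 o2] iy0.
        have [l1 [f1 g1]] := t1 _ o1 iy0; have [l2 [f2 g2]] := t2 _ o2 iy0.
        exists (l1 ++ l2); split; first by apply/List.Forall_app; split.
        by move=> z iz /List.Forall_app [z1 z2]; split; [exact: g1 | exact: g2].
      move=> F hF; split.
        by move=> c [P1 hP1 hc]; have [s1 _] := hF _ hP1; exact: s1.
      move=> y0 [P1 hP1 py] iy0; have [_ t1] := hF _ hP1.
      have [l [f1 g1]] := t1 _ py iy0; exists l; split => //.
      by move=> z iz fz; exists P1 => //; exact: g1.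
    - move=> _ [R [CR [ O' [_ ->]]]]; split; first by move=> z [].
      move=> y0 [py o'] iy0; exists [:: (R, O')]; split; first by constructor.
      by move=> z iz /List.Forall_cons_iff [ oz _]; split => //; case: iz.
  have [_ t1] := tO; have [l [f1 g1]] := t1 _ Oy iy.
  have [R [CR lR]] : exists R, C R /\ List.Forall (fun p => p.1 `<=` R) l.
    elim: l f1 {g1} => [|p l IH] f1.
      by have [R CR] := C0; exists R; split.
    move: f1 => /List.Forall_cons_iff [[Cp _] fl].
    have [R [CR lR]] := IH fl.
    have [R' [CR' s1 s2]] := Cdir _ _ Cp CR.
    exists R'; split => //; constructor => //.
    by apply: List.Forall_impl lR => q hq; exact: subset_trans s2.
  have [x ex] : quot R (y R) by exact: ((iy.1 R).1 CR).
  exists (h x); split; last by exists x.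
  split; last exact: hinv.
  apply: g1; first exact: hinv.
  apply/List.Forall_forall => p inp.
  have [Cp pp] := (List.Forall_forall _ _).1 f1 p inp.
  have sp := (List.Forall_forall _ _).1 lR p inp.
  rewrite hE //; suff <- : y p.1 = cls p.1 x by [].
  exact: iy.2 _ _ _ Cp CR sp ex.
split.
  move=> _ [ O [hO ->]].
  have -> : h @^-1` (O `&` inv_limit C) = h @^-1` O.
    by apply/seteqP; split => x /=; [case | move=> ?; split => //; exact: hinv].
  suff : [set O : set (set (set X) -> set X) | O `<=` prod_space C /\ open (h @^-1` O)] O.
    by case.
  apply: hO.
  - split; first by move=> O1 [].
    split.
      split => //; have -> : h @^-1` prod_space C = setT.
        by apply/seteqP; split => x // _; exact: (hinv x).1.
      exact: openT.
    split.
      move=> O1 O2 [s1 o1] [s2 o2]; split; first by move=> c [hc _]; exact: s1.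
      exact: openI.
    move=> F hF; split.
      by move=> c [P1 hP1 hc]; have [s1 _] := hF _ hP1; exact: s1.
    by apply: bigcup_open => P1 /hF [].
  - move=> _ [R [CR [ O' [qO ->]]]]; split; first by move=> z [].
    have -> : h @^-1` [set y | prod_space C y /\ O' (y R)] = [set x | O' (cls R x)].
      apply/seteqP; split => x /=; rewrite hE //; first by case.
      by move=> ?; split => //; exact: (hinv x).1.
    exact: Qtop_open (Ccoz _ CR) qO.
move=> U oU.
pose piece := fun W : set X =>
  [set y | prod_space C y /\ (cls (PG [set W]) @` W) (y (PG [set W]))].
pose F := [set S | exists W, (cozero W /\ W `<=` U) /\ S = piece W].
have CW : forall W, cozero W -> C (PG [set W]).
  by move=> W cW; apply: inC; [move=> _ -> | exact: countable1].
exists ((\bigcup_(S in F) S) `&` inv_limit C); split.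
  exists (\bigcup_(S in F) S); split => //.
  move=> tau htau hsub; apply: htau.2.2.2 => _ [W [[cW sW] ->]].
  apply: hsub; exists (PG [set W]); split; first exact: CW.
  exists (cls (PG [set W]) @` W); split => //.
  move=> tau' _ hs'; apply: hs'; exists W => //; exact: Pgen_base.
apply/seteqP; split.
  move=> _ [x Ux <-]; split; last by exists x.
  split; last exact: hinv.
  have [f [cf [bf [fx0 f1]]]] := hcr (~` U) x (open_closedC oU) (fun H => H Ux).
  pose W := [set z | 0 < 1 - f z].
  have cW : cozero W by exact: cozero_sub1.
  have sW : W `<=` U.
    move=> z hz; apply: contrapT => nz; move: hz; rewrite /W /= f1 //.
    by rewrite subrr ltxx.
  exists (piece W); first by exists W.
  split; first exact: (hinv x).1.
  rewrite hE; last exact: CW.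
  by exists x => //; rewrite /W /= fx0 subr0; exact: ltr01.
move=> y [[[S [W [[cW sW] ->]] [_ [w hw0 ew]]] _] [x _ ex]]; subst y.
exists x => //; apply: sW.
rewrite hE in ew; last exact: CW.
have hR : PG [set W] W by apply: Pgen_base.
exact: (@cls_mem _ _ W x w hR ew hw0).
Qed.
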